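(* In the policy iteration scheme where $V_{q_c^{(k)}}$ is the fixed point of $\mathcal T_{q_c^{(k)}}$, $Q_{q_c^{(k)}}(x,a)=\eta\, r(x,a)+\log\mathbb E_{x'\sim p(\cdot|x,a)}[\exp(V_{q_c^{(k)}}(x'))]$, and $$q_c^{(k+1)}(a|x)=\frac{\pi(a|x)\exp(Q_{q_c^{(k)}}(x,a))}{\mathbb E_{a'\sim\pi(\cdot|x)}[\exp(Q_{q_c^{(k)}}(x,a'))]},$$ one has $V_{q_c^{(k+1)}}(x)\ge V_{q_c^{(k)}}(x)$ for all $x\in\mathcal X$ and all $k$.
   Context: Setting: a Markov decision process with finite state space $\mathcal X$, action space $\mathcal A$, reward $r$, transition kernel $p(\cdot|x,a)$; $\mathcal X^0$ is the set of terminal states and a terminal state is reached with probability one under every policy. A baseline policy $\pi$ and temperature $\eta>0$ are fixed. Value functions satisfy $V=0$ on $\mathcal X^0$. For a variational policy $q_c$, the $q_c$-induced operator is $$\mathcal T_{q_c}[V](x):=\mathbb E_{a\sim q_c(\cdot|x)}\Big[\eta\, r(x,a)-\log\frac{q_c(a|x)}{\pi(a|x)}+\max_{q_d}\mathbb E_{x'\sim q_d(\cdot|x,a)}\Big[V(x')-\log\frac{q_d(x'|x,a)}{p(x'|x,a)}\Big]\Big],$$ the maximum being over transition kernels $q_d(\cdot|x,a)$; it has a unique fixed point $V_{q_c}$. *)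

(* Defs.v *)
From HB Require Import structures.
From mathcomp Require Import all_boot all_order all_algebra.
From mathcomp Require Import all_classical all_reals all_analysis.
Set Implicit Arguments. Unset Strict Implicit. Unset Printing Implicit Defensive.
Import Order.TTheory GRing.Theory Num.Theory.
Import numFieldNormedType.Exports.
Local Open Scope classical_set_scope.
Local Open Scope ring_scope.

Section MDP.
Variables (R : realType) (X A : finType).

Definition is_dist (T : finType) (f : T -> R) :=
  (forall t, 0 <= f t) /\ \sum_(t : T) f t = 1.

Definition is_policy (mu : X -> A -> R) := forall x, is_dist (mu x).

Definition is_kernel (p : X -> A -> X -> R) := forall x a, is_dist (p x a).

(* probability of not having reached a terminal state within n steps,
   starting from x, under policy mu and transitions p *)
Fixpoint survival (X0 : {set X}) (p : X -> A -> X -> R) (mu : X -> A -> R)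
    (n : nat) (x : X) : R :=
  match n with
  | 0 => (x \notin X0)%:R
  | n'.+1 => (x \notin X0)%:R *
      \sum_(a : A) mu x a * \sum_(y : X) p x a y * survival X0 p mu n' y
  end.

Definition terminates (X0 : {set X}) (p : X -> A -> X -> R) :=
  forall mu, is_policy mu -> forall x,
    (fun n => survival X0 p mu n x) @ \oo --> (0 : R).

(* max over q_d(.|x,a) of E_{x'~q_d}[V(x') - log(q_d(x')/p(x'|x,a))];
   kernels q_d not absolutely continuous w.r.t. p(.|x,a) give -oo and are
   excluded; 0 log 0 = 0 is automatic since ln 0 = 0 in mathcomp. *)
Definition soft_backup (p : X -> A -> X -> R) (V : X -> R) (x : X) (a : A) : R :=
  sup [set v : R | exists qd : X -> R,
        [/\ is_dist qd, (forall y, 0 < qd y -> 0 < p x a y) &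
            v = \sum_(y : X) qd y * (V y - ln (qd y / p x a y))]].

Definition T_op (r : X -> A -> R) (p : X -> A -> X -> R) (pi : X -> A -> R)
    (eta : R) (qc : X -> A -> R) (V : X -> R) (x : X) : R :=
  \sum_(a : A) qc x a *
     (eta * r x a - ln (qc x a / pi x a) + soft_backup p V x a).

Definition is_fixed_point (X0 : {set X}) (r : X -> A -> R)
    (p : X -> A -> X -> R) (pi : X -> A -> R) (eta : R)
    (qc : X -> A -> R) (V : X -> R) :=
  (forall x, x \in X0 -> V x = 0) /\
  (forall x, x \notin X0 -> V x = T_op r p pi eta qc V x).

Definition Qfun (r : X -> A -> R) (p : X -> A -> X -> R) (eta : R)
    (V : X -> R) (x : X) (a : A) : R :=
  eta * r x a + ln (\sum_(y : X) p x a y * expR (V y)).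

End MDP.

(* Main.v *)
Require Import Defs.
From HB Require Import structures.
From mathcomp Require Import all_boot all_order all_algebra.
From mathcomp Require Import all_classical all_reals all_analysis.
From mathcomp Require Import ring lra.
Import Order.TTheory GRing.Theory Num.Theory.
Import numFieldNormedType.Exports.
Local Open Scope ring_scope.

Lemma dist_pos {R : realType} {T : finType} {w : T -> R} :
  is_dist w -> exists t, 0 < w t.
Proof.
case=> w0 w1; case: (pickP (fun t => 0 < w t)) => [t /= wt|H]; first by exists t.
exfalso; have : \sum_t w t = 0.
  by apply: big1 => t _; apply/eqP; rewrite eq_le w0 andbT leNgt H.
by rewrite w1 => /eqP; rewrite oner_eq0.
Qed.

Lemma sum_exp_pos {R : realType} {T : finType} (c f : T -> R) :
  is_dist c -> 0 < \sum_t c t * expR (f t).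
Proof.
move=> hc; have [t ct] := dist_pos hc; case: hc => c0 _.
rewrite (bigD1 t) //=.
have h1 : 0 < c t * expR (f t) by rewrite mulr_gt0 // expR_gt0.
have h2 : 0 <= \sum_(i | i != t) c i * expR (f i).
  by apply: sumr_ge0 => i _; rewrite mulr_ge0 // expR_ge0.
lra.
Qed.

Lemma ln_le_sub1 {R : realType} (y : R) : 0 < y -> ln y <= y - 1.
Proof.
move=> y0; have := @le_ln1Dx R (y - 1); rewrite addrCA subrr addr0; apply; lra.
Qed.

Lemma gibbs {R : realType} {T : finType} (w c f : T -> R) :
  is_dist w -> (forall t, 0 <= c t) -> (forall t, 0 < w t -> 0 < c t) ->
  \sum_t w t * (f t - ln (w t / c t)) <= ln (\sum_t c t * expR (f t)).
Proof.
move=> hw c0 wc; have [t wt] := dist_pos hw.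
set Z := \sum_t c t * expR (f t).
have Z0 : 0 < Z.
  rewrite /Z (bigD1 t) //=.
  have h1 : 0 < c t * expR (f t) by rewrite mulr_gt0 ?wc // expR_gt0.
  have h2 : 0 <= \sum_(i | i != t) c i * expR (f i).
    by apply: sumr_ge0 => i _; rewrite mulr_ge0 // expR_ge0.
  lra.
case: hw => w0 w1.
have : \sum_t (w t * (f t - ln (w t / c t)) - w t * ln Z)
    <= \sum_t (c t * expR (f t) / Z - w t).
  apply: ler_sum => s _.
  have [ws|ws] := eqVneq (w s) 0.
    rewrite ws !mul0r !subr0; apply: divr_ge0; last exact: ltW.
    by rewrite mulr_ge0 // expR_ge0.
  have wsp : 0 < w s by rewrite lt_neqAle eq_sym ws w0.
  have csp := wc s wsp.
  set y := c s * expR (f s) / (w s * Z).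
  have yp : 0 < y by rewrite /y divr_gt0 ?mulr_gt0 // expR_gt0.
  have ly : ln y = ln (c s) + f s - ln (w s) - ln Z.
    rewrite /y ln_div ?posrE ?mulr_gt0 ?expR_gt0 //.
    by rewrite !lnM ?posrE ?expR_gt0 // expRK; lra.
  have lwc : ln (w s / c s) = ln (w s) - ln (c s) by rewrite ln_div ?posrE.
  have := ln_le_sub1 _ yp; rewrite ly lwc => H.
  have e : c s * expR (f s) / Z = w s * y.
    rewrite /y; field; rewrite ?gt_eqF //.
  rewrite e; rewrite -subr_ge0.
  have : 0 <= w s * (y - 1 - (ln (c s) + f s - ln (w s) - ln Z)).
    by rewrite mulr_ge0 // ?subr_ge0 // ltW.
  congr (0 <= _); ring.
rewrite !sumrB -mulr_suml w1 mul1r -mulr_suml -[X in _ <= _ - X]w1.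
rewrite -/Z mulfV ?gt_eqF // w1; lra.
Qed.

Lemma attain {R : realType} {T : finType} (c f : T -> R) :
  is_dist c ->
  let Z := \sum_t c t * expR (f t) in
  let w := fun t => c t * expR (f t) / Z in
  [/\ is_dist w, (forall t, 0 < w t -> 0 < c t) &
      \sum_t w t * (f t - ln (w t / c t)) = ln Z].
Proof.
move=> hc Z w; have Z0 : 0 < Z := sum_exp_pos c f hc.
case: hc => c0 c1.
have w0 : forall t, 0 <= w t.
  by move=> t; rewrite /w divr_ge0 ?mulr_ge0 ?expR_ge0 // ltW.
have wc : forall t, 0 < w t -> 0 < c t.
  move=> t; rewrite /w; have [->|ct] := eqVneq (c t) 0; first by rewrite !mul0r ltxx.
  by move=> _; rewrite lt_neqAle eq_sym ct c0.
have w1 : \sum_t w t = 1.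
  by rewrite /w -mulr_suml -/Z mulfV // gt_eqF.
split => //.
rewrite -[RHS]mul1r -w1 mulr_suml; apply: eq_bigr => t _.
have [ct|ct] := eqVneq (c t) 0; first by rewrite /w ct !mul0r.
have ctp : 0 < c t by rewrite lt_neqAle eq_sym ct c0.
congr (_ * _).
have -> : w t / c t = expR (f t) / Z by rewrite /w; field; rewrite gt_eqF.
rewrite ln_div ?posrE ?expR_gt0 // expRK; ring.
Qed.

Local Open Scope classical_set_scope.
Local Open Scope ring_scope.
Lemma sb_eq {R : realType} {X A : finType} (p : X -> A -> X -> R) V x a :
  is_dist (p x a) -> soft_backup p V x a = ln (\sum_y p x a y * expR (V y)).
Proof.
move=> hp; have [hw hwc he] := attain (p x a) V hp.
have ub : ubound [set v : R | exists qd : X -> R,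
        [/\ is_dist qd, (forall y, 0 < qd y -> 0 < p x a y) &
            v = \sum_(y : X) qd y * (V y - ln (qd y / p x a y))]]
          (ln (\sum_y p x a y * expR (V y))).
  move=> v [qd [hq hqc ->]]; apply: gibbs => //; by case: hp.
have inE : [set v : R | exists qd : X -> R,
        [/\ is_dist qd, (forall y, 0 < qd y -> 0 < p x a y) &
            v = \sum_(y : X) qd y * (V y - ln (qd y / p x a y))]]
          (ln (\sum_y p x a y * expR (V y))).
  by eexists; split; [exact: hw|exact: hwc|rewrite he].
apply/eqP; rewrite eq_le; apply/andP; split.
  by apply: ge_sup => //; eexists; exact: inE.
by apply: sup_upper_bound => //; split; [eexists; exact: inE|eexists; exact: ub].
Qed.

Lemma Top_eq {R : realType} {X A : finType} r (p : X -> A -> X -> R) pi eta qc V x :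
  is_kernel p ->
  T_op r p pi eta qc V x =
  \sum_a qc x a * (Qfun r p eta V x a - ln (qc x a / pi x a)).
Proof.
move=> hp; rewrite /T_op; apply: eq_bigr => a _; rewrite sb_eq // /Qfun.
congr (_ * _); ring.
Qed.

Lemma L_le {R : realType} {T : finType} (w W0 W1 : T -> R) (M : R) :
  is_dist w -> (forall y, W0 y - W1 y <= M) ->
  ln (\sum_y w y * expR (W0 y)) - ln (\sum_y w y * expR (W1 y)) <= M /\
  ((exists z, 0 < w z /\ W0 z - W1 z < M) ->
   ln (\sum_y w y * expR (W0 y)) - ln (\sum_y w y * expR (W1 y)) < M).
Proof.
move=> hw hD.
have B0 := sum_exp_pos w W1 hw.
have A0 := sum_exp_pos w W0 hw.
case: hw => w0 w1.
have term : forall y, w y * expR (W0 y) <= w y * expR (W1 y) * expR M.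
  move=> y; rewrite -mulrA -expRD; apply: ler_wpM2l => //.
  rewrite ler_expR; have := hD y; lra.
have key : forall u, 0 < u -> u <= (\sum_y w y * expR (W1 y)) * expR M ->
   ln u - ln (\sum_y w y * expR (W1 y)) <= M.
  move=> u u0 hu.
  have : ln u <= ln ((\sum_y w y * expR (W1 y)) * expR M).
    by rewrite ler_ln ?posrE ?mulr_gt0 ?expR_gt0.
  rewrite lnM ?posrE ?expR_gt0 // expRK; lra.
have keys : forall u, 0 < u -> u < (\sum_y w y * expR (W1 y)) * expR M ->
   ln u - ln (\sum_y w y * expR (W1 y)) < M.
  move=> u u0 hu.
  have : ln u < ln ((\sum_y w y * expR (W1 y)) * expR M).
    by rewrite ltr_ln ?posrE ?mulr_gt0 ?expR_gt0.
  rewrite lnM ?posrE ?expR_gt0 // expRK; lra.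
split.
  apply: key => //; rewrite mulr_suml; exact: ler_sum.
move=> [z [wz Dz]]; apply: keys => //; rewrite mulr_suml.
rewrite (bigD1 z) //= [X in _ < X](bigD1 z) //=.
apply: ltr_leD; last by apply: ler_sum.
rewrite -mulrA -expRD; rewrite ltr_pM2l // ltr_expR; lra.
Qed.

Theorem mainTheorem7 (R : realType) (X A : finType) (X0 : {set X})
  (r : X -> A -> R) (p : X -> A -> X -> R) (pi : X -> A -> R) (eta : R)
  (q : nat -> X -> A -> R) (V : nat -> X -> R) :
  0 < eta ->
  is_kernel p ->
  is_policy pi ->
  terminates X0 p ->
  is_policy (q 0%N) ->
  (forall x a, 0 < q 0%N x a -> 0 < pi x a) ->
  (forall k, is_fixed_point X0 r p pi eta (q k) (V k)) ->
  (forall k x a, q k.+1 x a =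
     pi x a * expR (Qfun r p eta (V k) x a) /
     \sum_(a' : A) pi x a' * expR (Qfun r p eta (V k) x a')) ->
  forall k x, V k x <= V k.+1 x.
Proof.
move=> eta0 hp hpi hterm hq0 hq0c hfix hq k x.
have qform : forall j x, q j.+1 x = (fun a => pi x a * expR (Qfun r p eta (V j) x a) /
     \sum_(a' : A) pi x a' * expR (Qfun r p eta (V j) x a')).
  by move=> j y; apply: funext => a; rewrite hq.
have hpol : forall j y, is_dist (q j y) /\ (forall a, 0 < q j y a -> 0 < pi y a).
  case=> [|j] y; first by split; [exact: hq0|exact: hq0c].
  rewrite qform; have [h1 h2 _] := attain (pi y) (Qfun r p eta (V j) y) (hpi y).
  by split.
set qn := q k.+1.
set D := fun y => V k y - V k.+1 y.
set L := fun y a => ln (\sum_z p y a z * expR (V k z)) - ln (\sum_z p y a z * expR (V k.+1 z)).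
have D0 : forall y, y \in X0 -> D y = 0.
  by move=> y yX; rewrite /D (proj1 (hfix k)) // (proj1 (hfix k.+1)) // subrr.
have step : forall y, y \notin X0 -> D y <= \sum_a qn y a * L y a.
  move=> y yX.
  have e1 : V k y <= ln (\sum_a pi y a * expR (Qfun r p eta (V k) y a)).
    rewrite (proj2 (hfix k)) // Top_eq //.
    have [h1 h2] := hpol k y.
    by apply: gibbs => //; move=> a; case: (hpi y).
  have e2 : \sum_a qn y a * (Qfun r p eta (V k) y a - ln (qn y a / pi y a))
      = ln (\sum_a pi y a * expR (Qfun r p eta (V k) y a)).
    rewrite /qn qform; have [_ _ h3] := attain (pi y) (Qfun r p eta (V k) y) (hpi y).
    exact: h3.
  have e3 := (proj2 (hfix k.+1)) y yX; rewrite Top_eq // in e3.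
  rewrite /D e3 -e2 in e1 *.
  have -> : \sum_a qn y a * L y a =
     \sum_a qn y a * (Qfun r p eta (V k) y a - ln (qn y a / pi y a)) -
     \sum_a q k.+1 y a * (Qfun r p eta (V k.+1) y a - ln (q k.+1 y a / pi y a)).
    rewrite -sumrB; apply: eq_bigr => a _; rewrite /L /Qfun /qn; ring.
  rewrite /qn in e1 *; lra.
pose xm := [arg max_(i > x) D i]%O.
have Dmax : forall y, D y <= D xm.
  rewrite /xm; case: (@arg_maxP _ _ _ x predT D erefl) => i _ Hi y.
  exact: Hi.
suff : D xm <= 0 by have := Dmax x; rewrite /D; lra.
rewrite leNgt; apply/negP => Mpos.
set M := D xm in Dmax Mpos.
have SX0 : forall y, D y = M -> y \notin X0.
  move=> y Dy; apply/negP => yX; move: (D0 y yX); rewrite Dy => M0.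
  by move: Mpos; rewrite M0 ltxx.
have clos : forall y, D y = M -> forall a z, 0 < qn y a -> 0 < p y a z -> D z = M.
  move=> y Dy a z qa pz.
  have st := step y (SX0 y Dy).
  have [hqn1 _] := hpol k.+1 y; case: hqn1 => qn0 qn1.
  have Lle : forall b, L y b <= M.
    by move=> b; have [h _] := L_le (p y b) (V k) (V k.+1) M (hp y b) Dmax; exact: h.
  have sum0 : \sum_b qn y b * (M - L y b) = 0.
    apply/eqP; rewrite eq_le; apply/andP; split.
      have -> : \sum_b qn y b * (M - L y b) = M * \sum_b qn y b - \sum_b qn y b * L y b.
        by rewrite mulr_sumr -sumrB; apply: eq_bigr => b _; ring.
      rewrite /qn qn1 mulr1 -/qn; lra.
    by apply: sumr_ge0 => b _; rewrite mulr_ge0 // subr_ge0.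
  have tge0 : forall b, true -> 0 <= qn y b * (M - L y b).
    by move=> b _; rewrite mulr_ge0 // subr_ge0.
  have Ha : qn y a * (M - L y a) = 0 by apply: (psumr_eq0P tge0 sum0).
  move/eqP: Ha; rewrite mulf_eq0 (gt_eqF qa) /= subr_eq0 => /eqP LM.
  apply/eqP; rewrite eq_le Dmax /=; rewrite leNgt; apply/negP => Dz.
  have [_ h] := L_le (p y a) (V k) (V k.+1) M (hp y a) Dmax.
  have := h (ex_intro _ z (conj pz Dz)); rewrite -/(L y a) -LM ltxx //.
have surv1 : forall n y, D y = M -> survival X0 p qn n y = 1.
  elim=> [|n IH] y Dy /=; first by rewrite (SX0 y Dy).
  rewrite (SX0 y Dy) mul1r.
  have [[qn0 qn1] _] := hpol k.+1 y.
  rewrite -[RHS]qn1; apply: eq_bigr => a _.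
  have [qa|qa] := eqVneq (qn y a) 0; first by rewrite qa !mul0r.
  have qap : 0 < qn y a by rewrite lt_neqAle eq_sym qa qn0.
  rewrite -[RHS]mulr1; congr (_ * _); case: (hp y a) => p0 p1; rewrite -[RHS]p1.
  apply: eq_bigr => z _.
  have [pz|pz] := eqVneq (p y a z) 0; first by rewrite pz mul0r.
  have pzp : 0 < p y a z by rewrite lt_neqAle eq_sym pz p0.
  by rewrite IH ?mulr1 //; exact: (clos y Dy a z qap pzp).
have qnpol : is_policy qn by move=> y; exact: (proj1 (hpol k.+1 y)).
have Hc := hterm qn qnpol xm.
have Hf : (fun n => survival X0 p qn n xm) = (fun _ => 1 : R).
  by apply: funext => n; apply: surv1.
rewrite Hf in Hc.
have e : (0 : R) = 1.
  have h1 : ((fun _ : nat => (1:R)) @ \oo --> (1:R))%classic by exact: cvg_cst.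
  exact: (cvg_unique (@Rhausdorff R) Hc h1).
by move/eqP: e; rewrite eq_sym oner_eq0.
Qed.
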